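(* Let $n\ge1$, $0\le r\le n$ and $0\le k\le\binom{n-1}{r}$ be integers, let $X=[n]$, and let $\mathcal{A}\subseteq[n]^{(r)}$ be the initial segment of the colexicographic order of size $k$. For $1\le i\le n$ let $\mathcal{A}_{i,0}=\{B\in X_i^{(r-1)}: B\cup\{i\}\in\mathcal{A}\}$, $\mathcal{A}_{i,1}=\{B\in X_i^{(r)}: B\in\mathcal{A}\}$ and $A_i=X^{(\ge r+1)}\cup\mathcal{A}_{i,1}\cup\mathcal{A}_{i,0}\subseteq Q_n$. Then for distinct $i,j\in[n]$, $A_i$ and $A_j$ are isomorphic if and only if $\sigma(\mathcal{A})=\mathcal{A}$ for the transposition $\sigma=(ij)$.
   Context: $X_i=[n]\setminus\{i\}$; $Y^{(m)}$ denotes the $m$-subsets of $Y$ and $X^{(\ge m)}$ the subsets of size at least $m$. Colexicographic order: $A<_{colex}B$ iff $\max(A\Delta B)\in B$. For a permutation $\sigma$, $\sigma(\mathcal{A})=\{\{\sigma(b_1),\dots,\sigma(b_t)\}:\{b_1,\dots,b_t\}\in\mathcal{A}\}$. $Q_n$ is the hypercube on the power set of $[n]$ with metric $|x\Delta y|$; two subsets of $Q_n$ are isomorphic if related by an automorphism of $Q_n$ (a map $x\mapsto\tau(x)\Delta I$, $\tau$ a permutation of $[n]$, $I\subseteq[n]$). *)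

(* Defs.v *)
(* [n] = {1..n} is modelled by 'I_n = {0..n-1} (order-preserving shift). *)
From mathcomp Require Import all_boot all_order all_fingroup.
Set Implicit Arguments. Unset Strict Implicit. Unset Printing Implicit Defensive.

Section Defs.
Variable n : nat.
Local Notation T := 'I_n.

Definition symdiff (A B : {set T}) : {set T} := (A :\: B) :|: (B :\: A).

Definition colex_lt (A B : {set T}) : bool :=
  [exists x, [&& x \in symdiff A B, x \in B &
                [forall y, (y \in symdiff A B) ==> (y <= x)%N]]].

Definition colex_initial (r k : nat) (F : {set {set T}}) : Prop :=
  [/\ forall B : {set T}, B \in F -> #|B| = r,
      #|F| = k &
      forall B C : {set T}, B \in F -> #|C| = r -> colex_lt C B -> C \in F].

Definition layers_ge (m : nat) : {set {set T}} := [set B : {set T} | (m <= #|B|)%N].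

Definition A_i0 (r : nat) (F : {set {set T}}) (i : T) : {set {set T}} :=
  [set B : {set T} | [&& i \notin B, #|B|.+1 == r & (i |: B) \in F]].

Definition A_i1 (r : nat) (F : {set {set T}}) (i : T) : {set {set T}} :=
  [set B : {set T} | [&& i \notin B, #|B| == r & B \in F]].

Definition A_i (r : nat) (F : {set {set T}}) (i : T) : {set {set T}} :=
  layers_ge r.+1 :|: A_i1 r F i :|: A_i0 r F i.

Definition cube_aut (tau : {perm T}) (I : {set T}) (x : {set T}) : {set T} :=
  symdiff (tau @: x) I.

Definition cube_isomorphic (S S' : {set {set T}}) : Prop :=
  exists (tau : {perm T}) (I : {set T}), [set cube_aut tau I x | x : {set T} in S] = S'.

Definition perm_family (s : {perm T}) (F : {set {set T}}) : {set {set T}} :=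
  [set (s @: B) | B : {set T} in F].
End Defs.

(* Main.v *)
Require Import Defs.
From mathcomp Require Import all_boot all_order all_fingroup zify.
Set Implicit Arguments. Unset Strict Implicit. Unset Printing Implicit Defensive.

Section H.
Variable n : nat.
Local Notation T := 'I_n.

Lemma in_symdiff (A B : {set T}) x : (x \in symdiff A B) = (x \in A) (+) (x \in B).
Proof. rewrite /symdiff !inE; by case: (x \in A); case: (x \in B). Qed.

Lemma mem_perm_imset (s : {perm T}) (B : {set T}) y : (y \in s @: B) = ((s^-1)%g y \in B).
Proof. by rewrite -{1}(permKV s y) mem_imset //; apply: perm_inj. Qed.

Lemma symdiff0 (A : {set T}) : symdiff A set0 = A.
Proof. by apply/setP=> x; rewrite in_symdiff inE addbF. Qed.

Lemma symdiffK (A B I : {set T}) : symdiff (symdiff A I) (symdiff B I) = symdiff A B.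
Proof. apply/setP=> x; rewrite !in_symdiff; by case: (x \in A); case: (x \in B); case: (x \in I). Qed.

Lemma perm_imset_symdiff (s : {perm T}) A B : s @: symdiff A B = symdiff (s @: A) (s @: B).
Proof. by apply/setP=> x; rewrite !in_symdiff !mem_perm_imset in_symdiff. Qed.

Lemma card_perm_imset (s : {perm T}) (A : {set T}) : #|s @: A| = #|A|.
Proof. by apply: card_imset; apply: perm_inj. Qed.

Lemma cube_dist (s : {perm T}) (I x y : {set T}) : #|symdiff (cube_aut s I x) (cube_aut s I y)| = #|symdiff x y|.
Proof. by rewrite /cube_aut symdiffK -perm_imset_symdiff card_perm_imset. Qed.

Lemma symdiff_eq0 (x y : {set T}) : #|symdiff x y| = 0 -> x = y.
Proof.
move/eqP; rewrite cards_eq0 => /eqP H; apply/setP=> z.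
have : z \notin symdiff x y by rewrite H inE.
by rewrite in_symdiff; case: (z \in x); case: (z \in y).
Qed.

Lemma cube_inj (s : {perm T}) (I : {set T}) : injective (cube_aut s I).
Proof. by move=> x y H; apply: symdiff_eq0; rewrite -(cube_dist s I) H /symdiff !setDv setU0 cards0. Qed.

Lemma dsub (v w : {set T}) : w \subset v -> #|symdiff v w| = #|v| - #|w|.
Proof.
move=> Hs; have -> : symdiff v w = v :\: w.
  apply/setP=> z; rewrite in_symdiff !inE; case Hz: (z \in w); case Hv: (z \in v) => //.
  by have := subsetP Hs z Hz; rewrite Hv.
by rewrite cardsD (setIidPr Hs).
Qed.

Lemma exists_sub (v : {set T}) s : s <= #|v| -> exists w : {set T}, w \subset v /\ #|w| = s.
Proof.
move=> Hs; have : 0 < #|[set A : {set T} | A \subset v & #|A| == s]| by rewrite cards_draws bin_gt0.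
by case/card_gt0P=> w; rewrite inE => /andP[H1 /eqP H2]; exists w.
Qed.

Lemma perm_family_eq (s : {perm T}) (F : {set {set T}}) : (forall B : {set T}, B \in F -> s @: B \in F) -> perm_family s F = F.
Proof.
move=> H; apply/eqP; rewrite eqEcard; apply/andP; split.
  by apply/subsetP=> y /imsetP[B HB ->]; apply: H.
rewrite card_in_imset //; move=> B C _ _ /= E.
apply/setP=> z; rewrite -(mem_imset (mem B) z (@perm_inj _ s)) E mem_imset //; exact: perm_inj.
Qed.
Lemma symdiffC (A B : {set T}) : symdiff A B = symdiff B A.
Proof. by apply/setP=> x; rewrite !in_symdiff addbC. Qed.
End H.

Section S.
Variables (n r : nat) (F : {set {set 'I_n}}) (m : 'I_n).
Local Notation T := 'I_n.
Hypothesis hm : forall y : T, (y <= m)%N.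
Hypothesis hr : 0 < r.
Hypothesis hrn : r < n.
Hypothesis Fr : forall B, B \in F -> #|B| = r.
Hypothesis Fm : forall B, B \in F -> m \notin B.
Hypothesis Fc : forall B C : {set T}, B \in F -> #|C| = r -> colex_lt C B -> C \in F.

Lemma notinA i w : w \in A_i r F i -> #|w| <= r ->
  [/\ i \notin w, m \notin w & (#|w| = r \/ (#|w|.+1 = r /\ i != m))].
Proof.
rewrite /A_i /layers_ge /A_i1 /A_i0 !inE => /orP[/orP[H|]|].
- by move=> H'; move: (leq_trans H H'); rewrite ltnn.
- by case/and3P=> H1 /eqP H2 H3 _; split => //; [apply: Fm | left].
- case/and3P=> H1 /eqP H2 H3 _; have := Fm H3; rewrite !inE negb_or => /andP[H4 H5].
  by split => //; right; split => //; rewrite eq_sym.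
Qed.

Definition ball i (v : {set T}) := forall w : {set T}, #|symdiff v w| <= n - r.+1 -> w \in A_i r F i.
Definition cc (i : T) : {set T} := [set x | (x != m) && (x != i)].

Lemma card_T : #|T| = n. Proof. exact: card_ord. Qed.

Lemma CT i : ball i setT.
Proof.
move=> w; have -> : symdiff setT w = ~: w.
  by apply/setP=> x; rewrite in_symdiff !inE.
rewrite cardsCs setCK card_T => H.
have Hw : #|w| <= n by move: (max_card (mem w)); rewrite card_T.
by rewrite /A_i /layers_ge !inE; apply/orP; left; apply/orP; left; lia.
Qed.

Lemma card_cc i : n = (i != m) + (#|cc i|).+1.
Proof.
have E : setT = m |: (i |: cc i) by apply/setP=> x; rewrite !inE; case: (x == m); case: (x == i).
have : #|[set: T]| = n by rewrite cardsT card_T.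
rewrite E cardsU1 cardsU1 !inE !eqxx /= andbF orbF eq_sym.
by case: (i == m) => /= H; lia.
Qed.

Lemma Cchar i v : ball i v -> v != setT -> v = cc i.
Proof.
move=> Hb HT.
have Hv : #|v| < n.
  have : v \proper setT by rewrite properT.
  by move/proper_card; rewrite cardsT card_T.
have Ca : forall x, (x == m) || (x == i) -> x \notin v.
  move=> x Hx; apply/negP=> xv.
  have Hs : #|v| - 1 - (n - r.+1) <= #|v :\ x|.
    by rewrite [in X in X <= _](cardsD1 x v) xv add1n subn1 /= leq_subr.
  case: (exists_sub Hs) => B [HB1 HB2].
  have xB : x \notin B by apply/negP=> /(subsetP HB1); rewrite !inE eqxx.
  have Hsub : x |: B \subset v.
    by apply/subsetP=> z; rewrite !inE => /orP[/eqP ->//|/(subsetP HB1)]; rewrite !inE => /andP[].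
  have Hc : #|x |: B| = (#|v| - 1 - (n - r.+1)).+1 by rewrite cardsU1 xB HB2.
  have := Hb (x |: B); rewrite dsub // Hc => /(_ ltac:(lia)) /notinA.
  rewrite Hc => /(_ ltac:(lia)) [H1 H2 _].
  by case/orP: Hx => /eqP Hx; subst x; [move: H2|move: H1]; rewrite !inE eqxx.
have mv : m \notin v by apply: Ca; rewrite eqxx.
have iv : i \notin v by apply: Ca; rewrite eqxx orbT.
have Cb : forall y, y != m -> y != i -> y \in v.
  move=> y ym yi; case yv: (y \in v) => //.
  have c2 : #|v| + 2 <= n.
    by have := max_card (mem (y |: (m |: v))); rewrite card_T cardsU1 cardsU1 !inE (negbTE ym) yv (negbTE mv) /= !add1n addn2.
  case: (eqVneq i m) => [Eim|Nim].
  - have Hs : #|v| - (n - r.+1) <= #|v| by lia.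
    case: (exists_sub Hs) => w [Hw1 Hw2].
    have := Hb w; rewrite dsub // Hw2 => /(_ ltac:(lia)) /notinA.
    rewrite Hw2 => /(_ ltac:(lia)) [_ _ [|[_]]]; [lia|by rewrite Eim eqxx].
  - have c3 : #|v| + 3 <= n.
      by have := max_card (mem (y |: (m |: (i |: v)))); rewrite card_T !cardsU1 !inE (negbTE ym) yv (negbTE yi) (negbTE mv) (negbTE iv) eq_sym (negbTE Nim) /= !add1n addn3.
    case: (leqP (n - r.+1) #|v|) => Hl.
    + have Hs : #|v| - (n - r.+1) <= #|v| by lia.
      case: (exists_sub Hs) => w [Hw1 Hw2].
      have := Hb w; rewrite dsub // Hw2 => /(_ ltac:(lia)) /notinA.
      by rewrite Hw2 => /(_ ltac:(lia)) [_ _ [|[]]]; lia.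
    + have E : symdiff v [set m] = m |: v.
        apply/setP=> z; rewrite in_symdiff !inE; case: (eqVneq z m) => [->|]; first by rewrite (negbTE mv).
        by rewrite addbF.
      have := Hb [set m]; rewrite E cardsU1 mv => /(_ ltac:(lia)) /notinA.
      by rewrite cards1 => /(_ ltac:(lia)) [_]; rewrite inE eqxx.
apply/setP=> x; rewrite !inE.
case: (eqVneq x m) => [->|xm]; first by rewrite (negbTE mv).
case: (eqVneq x i) => [->|xi]; first by rewrite (negbTE iv).
exact: Cb.
Qed.

Lemma Cfull i : ball i (cc i) -> forall C : {set T}, #|C| = r -> m \notin C -> C \in F.
Proof.
move=> Hb C HC mC; have Hn := card_cc i.
case iC: (i \in C).
- have im : i != m by apply/eqP=> E; move: mC; rewrite -E iC.
  have HB : #|C :\ i| = r.-1 by move: (cardsD1 i C); rewrite iC HC => ->.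
  have Hsub : C :\ i \subset cc i.
    apply/subsetP=> z; rewrite !inE => /andP[zi zC]; rewrite zi andbT.
    by apply/eqP=> E; move: mC; rewrite -E zC.
  have := Hb (C :\ i); rewrite dsub // HB => /(_ ltac:(lia)).
  rewrite /A_i /layers_ge /A_i1 /A_i0 !inE HB => /orP[/orP[H|/and3P[_ /eqP H _]]|/and3P[_ _ H]]; try lia.
  by rewrite setD1K in H.
- have Hsub : C \subset cc i.
    apply/subsetP=> z zC; rewrite !inE; apply/andP; split.
    + by apply/eqP=> E; move: mC; rewrite -E zC.
    + by apply/eqP=> E; move: iC; rewrite -E zC.
  have := Hb C; rewrite dsub // HC => /(_ ltac:(lia)).
  rewrite /A_i /layers_ge /A_i1 /A_i0 !inE HC => /orP[/orP[H|/and3P[_ _ H]]|/and3P[_ /eqP H _]] //; lia.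
Qed.


Lemma tperm_mem (lo hi : T) (B : {set T}) y : (y \in tperm lo hi @: B) = (tperm lo hi y \in B).
Proof. by rewrite mem_perm_imset tpermV. Qed.

Lemma tperm_invol (lo hi : T) (B : {set T}) : tperm lo hi @: (tperm lo hi @: B) = B.
Proof. by apply/setP=> y; rewrite !tperm_mem tpermK. Qed.

Lemma shift_lt (lo hi : T) (B : {set T}) : (lo < hi)%N -> B \in F -> hi \in B -> lo \notin B ->
  tperm lo hi @: B \in F.
Proof.
move=> lh HB hB lB; apply: (Fc HB); first by rewrite card_perm_imset; apply: Fr.
apply/existsP; exists hi; rewrite in_symdiff tperm_mem tpermR (negbTE lB) hB /=.
apply/forallP=> y; apply/implyP; rewrite in_symdiff tperm_mem.
case: (tpermP lo hi y) => [->|->|/eqP yl /eqP yh].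
- by move=> _; apply: ltnW.
- by [].
- by rewrite addbb.
Qed.

Lemma layer i : [set x in A_i r F i | #|x| == r] = [set B in F | i \notin B].
Proof.
apply/setP=> x; rewrite /A_i /layers_ge /A_i1 /A_i0 !inE.
case: (boolP (x \in F)) => xF.
- by rewrite (Fr xF) eqxx !andbT /= ltnn /= eqn_leq ltnn /= andbF orbF.
- rewrite andbF /=; case: (eqVneq #|x| r) => [->|]; last by rewrite andbF.
  by rewrite ltnn eqn_leq ltnn /= !andbF.
Qed.

Lemma shift_sym (lo hi : T) : (lo < hi)%N ->
  #|[set B in F | lo \notin B]| = #|[set B in F | hi \notin B]| -> perm_family (tperm lo hi) F = F.
Proof.
move=> lh Hc.
pose f := fun B : {set T} => tperm lo hi @: B.
have finj : injective f by move=> B C E; rewrite -(tperm_invol lo hi B) -(tperm_invol lo hi C); rewrite /f in E; rewrite E.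
have Hsub : f @: [set B in F | lo \notin B] \subset [set B in F | hi \notin B].
  apply/subsetP=> y /imsetP[B]; rewrite !inE => /andP[BF lB] ->; rewrite /f tperm_mem tpermR lB andbT.
  case hB: (hi \in B); first exact: shift_lt.
  have -> : tperm lo hi @: B = B; last by [].
  apply/setP=> z; rewrite tperm_mem; case: (tpermP lo hi z) => [->|->|] //; by rewrite ?hB ?(negbTE lB).
have Heq : f @: [set B in F | lo \notin B] = [set B in F | hi \notin B].
  by apply/eqP; rewrite eqEcard Hsub card_imset // Hc leqnn.
apply: perm_family_eq => B BF.
case lB: (lo \in B); last first.
  have : B \in [set B in F | lo \notin B] by rewrite inE BF lB.
  move/(imset_f f); rewrite Heq inE => /andP[] //.
case hB: (hi \in B).
  have -> : tperm lo hi @: B = B; last by [].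
  apply/setP=> z; rewrite tperm_mem; case: (tpermP lo hi z) => [->|->|] //; by rewrite ?hB ?lB.
have : B \in [set B in F | hi \notin B] by rewrite inE BF hB.
rewrite -Heq => /imsetP[C]; rewrite inE => /andP[CF _] ->.
by rewrite tperm_invol.
Qed.


Lemma forward (s : {perm T}) (I : {set T}) (i j : T) : i != j ->
  [set cube_aut s I x | x in A_i r F i] = A_i r F j -> perm_family (tperm i j) F = F.
Proof.
move=> ij E.
have pinj : injective (cube_aut s I) := @cube_inj _ s I.
have [g gK Kg] := injF_bij pinj.
have tr : forall v, ball i v -> ball j (cube_aut s I v).
  move=> v Hb w Hw; rewrite -(Kg w) -E; apply: imset_f; apply: Hb.
  by rewrite -(cube_dist s I v (g w)) Kg.
have bk : forall u, ball j (cube_aut s I u) -> ball i u.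
  move=> u Hb w Hw; have : cube_aut s I w \in A_i r F j by apply: Hb; rewrite cube_dist.
  by rewrite -E => /imsetP[w' Hw' /pinj ->].
have HT := tr _ (CT i).
have cT : forall k, #|symdiff setT (cc k)| = 1 + (k != m).
  move=> k; have -> : symdiff setT (cc k) = ~: cc k by apply/setP=> x; rewrite in_symdiff !inE.
  have := cardsC (cc k); rewrite card_T; have := card_cc k; lia.
case: (eqVneq (cube_aut s I setT) setT) => [PT|PT].
- have I0 : I = set0.
    apply/setP=> x; rewrite inE; apply/negP=> xI.
    have : x \in cube_aut s I setT by rewrite PT inE.
    by rewrite /cube_aut in_symdiff mem_perm_imset inE xI.
  have phiE : forall x, cube_aut s I x = s @: x by move=> x; rewrite /cube_aut I0 symdiff0.
  have Hc : #|[set B in F | i \notin B]| = #|[set B in F | j \notin B]|.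
    rewrite -!layer -E.
    have -> : [set x in [set cube_aut s I x | x in A_i r F i] | #|x| == r]
              = cube_aut s I @: [set x in A_i r F i | #|x| == r].
      apply/setP=> y; apply/idP/idP.
      + rewrite inE => /andP[/imsetP[x Hx ->] Hr]; move: Hr; rewrite phiE card_perm_imset => Hr.
        by rewrite -phiE; apply: imset_f; rewrite inE Hx Hr.
      + case/imsetP=> x Hx ->; case/setIdP: Hx => Hx Hr.
        by rewrite inE imset_f //= phiE card_perm_imset.
    by rewrite card_imset.
  case: (ltngtP i j) => [lt|gt|eq].
  + exact: shift_sym.
  + by rewrite tpermC; apply: shift_sym => //; rewrite Hc.
  + by move/val_inj: eq => eq; rewrite eq eqxx in ij.
- have Pc := Cchar HT PT.
  have Pu : cube_aut s I (g setT) = setT := Kg setT.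
  have Bu : ball i (g setT) by apply: bk; rewrite Pu; exact: CT.
  have uT : g setT != setT by apply/eqP => uT; move: PT; rewrite -{1}uT Pu eqxx.
  have Uc := Cchar Bu uT.
  have D := cube_dist s I setT (g setT).
  rewrite Pu Pc Uc symdiffC !cT in D.
  case: (eqVneq i m) => im; case: (eqVneq j m) => jm.
  + by move: ij; rewrite im jm eqxx.
  + by move: D; rewrite im jm eqxx.
  + by move: D; rewrite im jm eqxx.
  + have Hf := @Cfull j ltac:(by rewrite -Pc).
    apply: perm_family_eq => B BF; apply: Hf; first by rewrite card_perm_imset; apply: Fr.
    by rewrite tperm_mem tpermD ?(eq_sym m) //; apply: Fm.
Qed.
End S.

Lemma back_mem n r (F : {set {set 'I_n}}) (i j : 'I_n) (x : {set 'I_n}) :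
  perm_family (tperm i j) F = F -> x \in A_i r F i -> tperm i j @: x \in A_i r F j.
Proof.
move=> HF; rewrite /A_i /layers_ge /A_i1 /A_i0 !inE card_perm_imset tperm_mem tpermR.
case/orP=> [/orP[->//|/and3P[H1 H2 H3]]|/and3P[H1 H2 H3]].
- by rewrite H1 H2 -HF imset_f // orbT.
- rewrite H1 H2 /=; apply/orP; right.
  have -> : j |: (tperm i j @: x) = tperm i j @: (i |: x) by rewrite imsetU1 tpermL.
  by rewrite -HF imset_f.
Qed.

Theorem lemma9 (n r k : nat) (F : {set {set 'I_n}}) (i j : 'I_n) :
  (1 <= n)%N -> (r <= n)%N -> (k <= 'C(n.-1, r))%N ->
  colex_initial r k F ->
  i != j ->
  (cube_isomorphic (A_i r F i) (A_i r F j) <-> perm_family (tperm i j) F = F).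
Proof.
move=> n1 rn kC [Fr Fk Fc] ij; split; last first.
  move=> HF; exists (tperm i j), set0; apply/setP=> y; apply/idP/idP.
  - by case/imsetP=> x Hx ->; rewrite /cube_aut symdiff0; exact: back_mem.
  - move=> Hy; apply/imsetP; exists (tperm i j @: y); last by rewrite /cube_aut symdiff0 tperm_invol.
    by rewrite tpermC; apply: back_mem => //; rewrite tpermC.
case=> s [I E].
move: F i j n1 rn kC Fr Fk Fc ij s I E; case: n => [|n] F i j; first by case: i.
move=> _ rn kC Fr Fk Fc ij s I E.
case: (posnP r) => [r0|rpos].
  apply: perm_family_eq => B BF; have := Fr B BF; rewrite r0 => /cards0_eq B0.
  by rewrite B0 imset0 -B0.
case: (ltnP r n.+1) => [rlt|rge].
- have Fm : forall B, B \in F -> (ord_max : 'I_n.+1) \notin B.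
    move=> B BF; apply/negP=> mB.
    pose D := [set C : {set 'I_n.+1} | C \subset [set~ ord_max] & #|C| == r].
    have HD : #|D| = 'C(n, r) by rewrite cards_draws cardsC1 card_ord.
    have BD : B \notin D by rewrite inE; apply/negP=> /andP[/subsetP/(_ _ mB)]; rewrite !inE eqxx.
    have DF : B |: D \subset F.
      apply/subsetP=> C; rewrite !inE => /orP[/eqP->//|/andP[Cs /eqP Cr]].
      apply: (Fc B C BF Cr); apply/existsP; exists ord_max.
      rewrite in_symdiff mB.
      have -> : (ord_max \in C) = false by apply/negP=> /(subsetP Cs); rewrite !inE eqxx.
      by rewrite /=; apply/forallP=> y; apply/implyP=> _; apply: leq_ord.
    have := subset_leq_card DF; rewrite cardsU1 BD HD Fk => H.
    by move: (leq_trans H kC); rewrite /= ltnn.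
  exact: (@forward n.+1 r F ord_max rpos rlt Fr Fm Fc s I i j ij E).
- have rn' : r = n.+1 by apply/eqP; rewrite eqn_leq rn rge.
  have F0 : F = set0.
    by apply/eqP; rewrite -cards_eq0 Fk -leqn0; move: kC; rewrite rn' /= bin_small.
  by rewrite F0; apply: perm_family_eq => B; rewrite inE.
Qed.
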